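(* Let $\rho^{ab}$ be a state on $\mathcal H_a\otimes\mathcal H_b$ and $\{|i\rangle\}$ a fixed orthonormal basis of $\mathcal H_a$. Set $B_i=(\langle i|\otimes I_b)\sqrt{\rho^{ab}}(|i\rangle\otimes I_b)$. Then $$C^a_A(\rho^{ab})=1-\sum_i\mathrm{Tr}(B_i^2),$$ and a closest partial incoherent state is $\sigma=\sum_{i,j}q_{ij}|i\rangle\langle i|\otimes|\beta_{j|i}\rangle\langle\beta_{j|i}|$, where $\{|\beta_{j|i}\rangle\}_j$ is an orthonormal eigenbasis of $B_i$ and $q_{ij}=\langle i\otimes\beta_{j|i}|\sqrt{\rho^{ab}}|i\otimes\beta_{j|i}\rangle^2/\sum_{k,l}\langle k\otimes\beta_{l|k}|\sqrt{\rho^{ab}}|k\otimes\beta_{l|k}\rangle^2$.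
   Context: Partial incoherent states: $I^a_P=\{\sum_ip_i|i\rangle\langle i|\otimes\sigma_i\}$. Affinity partial coherence: $C^a_A(\rho^{ab})=\min_{\sigma\in I^a_P}\big(1-A^2(\rho^{ab},\sigma)\big)$ with $A(\rho,\sigma)=\mathrm{Tr}(\sqrt\rho\sqrt\sigma)$. *)

(* Defs.v *)
From HB Require Import structures.
From mathcomp Require Import all_boot all_order all_algebra all_field.
From mathcomp Require Import sesquilinear spectral.
Set Implicit Arguments. Unset Strict Implicit. Unset Printing Implicit Defensive.
Import Order.TTheory GRing.Theory Num.Theory.
Local Open Scope ring_scope.

Definition adjmx (k l : nat) (A : 'M[algC]_(k, l)) : 'M[algC]_(l, k) :=
  (map_mx Num.conj A)^T.

Definition psdmx (N : nat) (A : 'M[algC]_N) : Prop :=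
  adjmx A = A /\ forall v : 'cV[algC]_N, 0 <= (adjmx v *m A *m v) 0 0.

Definition is_state (N : nat) (rho : 'M[algC]_N) : Prop :=
  psdmx rho /\ \tr rho = 1.

(* Matrix square root via the spectral decomposition A = P^-1 diag(d) P
   (P unitary): sqrt A = P^-1 diag(sqrt d) P; for A psd this is the
   unique psd square root. *)
Definition sqrtmx (N : nat) (A : 'M[algC]_N) : 'M[algC]_N :=
  invmx (spectralmx A) *m diag_mx (map_mx sqrtC (spectral_diag A)) *m spectralmx A.

Definition affinity (N : nat) (rho sigma : 'M[algC]_N) : algC :=
  \tr (sqrtmx rho *m sqrtmx sigma).

(* Kronecker product A (x) B on H_a (x) H_b; the basis vector |i> (x) |j>
   has index mxvec_index i j. *)
Definition kron (m1 n1 m2 n2 : nat) (A : 'M[algC]_(m1, n1)) (B : 'M[algC]_(m2, n2))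
  : 'M[algC]_(m1 * m2, n1 * n2) :=
  \matrix_(k, l)
    (let: (i1, i2) := enum_val (cast_ord (esym (mxvec_cast m1 m2)) k) in
     let: (j1, j2) := enum_val (cast_ord (esym (mxvec_cast n1 n2)) l) in
     A i1 j1 * B i2 j2).

Definition partial_incoherent (m n : nat) (sigma : 'M[algC]_(m * n)) : Prop :=
  exists (p : 'I_m -> algC) (s : 'I_m -> 'M[algC]_n),
    [/\ forall i, 0 <= p i, \sum_i p i = 1, forall i, is_state (s i)
      & sigma = \sum_i p i *: kron (delta_mx i i) (s i)].

(* B_i = (<i| (x) I_b) sqrt(rho) (|i> (x) I_b), written entrywise:
   (B_i)_{jk} = <i j| sqrt rho |i k>. *)
Definition Bblock (m n : nat) (rho : 'M[algC]_(m * n)) (i : 'I_m) : 'M[algC]_n :=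
  \matrix_(j, k) sqrtmx rho (mxvec_index i j) (mxvec_index i k).

(* <i (x) beta_{j|i}| sqrt rho |i (x) beta_{j|i}> where beta_{j|i} is the
   j-th column of V i; equals beta^dagger B_i beta. *)
Definition diag_elt (m n : nat) (rho : 'M[algC]_(m * n)) (V : 'I_m -> 'M[algC]_n)
  (i : 'I_m) (j : 'I_n) : algC :=
  (adjmx (col j (V i)) *m Bblock rho i *m col j (V i)) 0 0.

Definition qcoef (m n : nat) (rho : 'M[algC]_(m * n)) (V : 'I_m -> 'M[algC]_n)
  (i : 'I_m) (j : 'I_n) : algC :=
  diag_elt rho V i j ^+ 2 / \sum_(k < m) \sum_(l < n) diag_elt rho V k l ^+ 2.

Definition closest_sigma (m n : nat) (rho : 'M[algC]_(m * n)) (V : 'I_m -> 'M[algC]_n)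
  : 'M[algC]_(m * n) :=
  \sum_(i < m) \sum_(j < n)
     qcoef rho V i j *: kron (delta_mx i i) (col j (V i) *m adjmx (col j (V i))).

(* Main.v *)
Require Import Defs.
From HB Require Import structures.
From mathcomp Require Import all_boot all_order all_algebra all_field.
From mathcomp Require Import sesquilinear spectral.
Import Order.TTheory GRing.Theory Num.Theory.
Local Open Scope ring_scope.
Set Implicit Arguments. Unset Strict Implicit. Unset Printing Implicit Defensive.

Lemma adjmxE k l (A : 'M[algC]_(k, l)) i j : adjmx A i j = (A j i)^*.
Proof. by rewrite /adjmx !mxE. Qed.

Lemma adjmxK k l (A : 'M[algC]_(k, l)) : adjmx (adjmx A) = A.
Proof. by apply/matrixP=> i j; rewrite !adjmxE conjCK. Qed.

Lemma adjmxM k l p (A : 'M[algC]_(k, l)) (B : 'M[algC]_(l, p)) :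
  adjmx (A *m B) = adjmx B *m adjmx A.
Proof.
apply/matrixP=> i j; rewrite adjmxE !mxE rmorph_sum /=.
by apply: eq_bigr => h _; rewrite rmorphM /= !mxE mulrC.
Qed.

Lemma adjmxD k l (A B : 'M[algC]_(k, l)) : adjmx (A + B) = adjmx A + adjmx B.
Proof. by apply/matrixP=> i j; rewrite !mxE rmorphD. Qed.

Lemma adjmxN k l (A : 'M[algC]_(k, l)) : adjmx (- A) = - adjmx A.
Proof. by apply/matrixP=> i j; rewrite !mxE rmorphN. Qed.

Lemma adjmxB k l (A B : 'M[algC]_(k, l)) : adjmx (A - B) = adjmx A - adjmx B.
Proof. by rewrite adjmxD adjmxN. Qed.

Lemma adjmxZ k l a (A : 'M[algC]_(k, l)) : adjmx (a *: A) = a^* *: adjmx A.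
Proof. by apply/matrixP=> i j; rewrite !mxE rmorphM. Qed.

Lemma adjmx1 k : adjmx (1%:M : 'M[algC]_k) = 1%:M.
Proof.
apply/matrixP=> i j; rewrite adjmxE !mxE eq_sym.
by case: (i == j); rewrite /= ?rmorph1 ?rmorph0.
Qed.

Lemma adjmx_sum k l (I : finType) (F : I -> 'M[algC]_(k, l)) :
  adjmx (\sum_i F i) = \sum_i adjmx (F i).
Proof.
apply/matrixP=> i j; rewrite adjmxE !summxE rmorph_sum.
by apply: eq_bigr => h _; rewrite adjmxE.
Qed.

Lemma adjmx_diag k (d : 'rV[algC]_k) :
  (forall i, 0 <= d 0 i) -> adjmx (diag_mx d) = diag_mx d.
Proof.
move=> d0; apply/matrixP=> i j; rewrite adjmxE !mxE eq_sym.
by case: eqP => [->|_]; rewrite ?mulr1n ?mulr0n ?geC0_conj ?rmorph0.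
Qed.

Lemma tr_mul_adj k l (A : 'M[algC]_(k, l)) :
  \tr (A *m adjmx A) = \sum_i \sum_j `|A i j| ^+ 2.
Proof.
rewrite /mxtrace; apply: eq_bigr => i _; rewrite mxE.
by apply: eq_bigr => j _; rewrite adjmxE normCK.
Qed.

Lemma tr_mul_adj_ge0 k l (A : 'M[algC]_(k, l)) : 0 <= \tr (A *m adjmx A).
Proof. by rewrite tr_mul_adj; apply: sumr_ge0 => i _; apply: sumr_ge0 => j _; rewrite exprn_ge0. Qed.

Lemma tr_mul_adj_eq0 k l (A : 'M[algC]_(k, l)) : \tr (A *m adjmx A) = 0 -> A = 0.
Proof.
rewrite tr_mul_adj => /eqP; rewrite psumr_eq0 => [/allP H|i _]; last first.
  by apply: sumr_ge0 => j _; rewrite exprn_ge0.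
apply/matrixP=> i j; rewrite mxE; move/(_ i (mem_index_enum _)): H.
rewrite /= psumr_eq0 => [/allP /(_ j (mem_index_enum _))|]; last by move=> *; rewrite exprn_ge0.
by rewrite /= expf_eq0 /= normr_eq0 => /eqP.
Qed.

Lemma unitary_adj k (U : 'M[algC]_k) : U \is unitarymx -> U *m adjmx U = 1%:M.
Proof. by move/unitarymxP; rewrite /adjmx map_trmx. Qed.

Lemma unitary_adjL k (U : 'M[algC]_k) : U \is unitarymx -> adjmx U *m U = 1%:M.
Proof. by move/unitary_adj/mulmx1C. Qed.

Lemma invmx_adj k (U : 'M[algC]_k) : U \is unitarymx -> invmx U = adjmx U.
Proof. by move/invmx_unitary; rewrite /adjmx map_trmx. Qed.

Lemma deltaM k l (M : 'M[algC]_(k, l)) i j :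
  (delta_mx 0 i *m M *m delta_mx j 0 : 'M_1) 0 0 = M i j.
Proof. by rewrite -rowE -colE !mxE. Qed.

Lemma adjmx_delta k l (i : 'I_k) (j : 'I_l) :
  adjmx (delta_mx i j : 'M[algC]_(k, l)) = delta_mx j i.
Proof.
apply/matrixP=> a b; rewrite adjmxE !mxE.
by case: (b == i); case: (a == j); rewrite /= ?rmorph1 ?rmorph0.
Qed.

Lemma herm_normal n (A : 'M[algC]_n) : adjmx A = A -> A \is normalmx.
Proof. by move=> hA; apply/normalmxP; rewrite -map_trmx -/(adjmx A) hA. Qed.

Lemma spec_decomp n (A : 'M[algC]_n) : adjmx A = A ->
  A = adjmx (spectralmx A) *m diag_mx (spectral_diag A) *m spectralmx A.
Proof.
move=> /herm_normal /orthomx_spectralP {1}->.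
by rewrite invmx_adj // spectral_unitarymx.
Qed.

Lemma spec_diagE n (A : 'M[algC]_n) : adjmx A = A ->
  spectralmx A *m A *m adjmx (spectralmx A) = diag_mx (spectral_diag A).
Proof.
move=> hA; have U1 := unitary_adj (spectral_unitarymx A).
rewrite {2}(spec_decomp hA) !mulmxA U1 mul1mx -mulmxA U1 mulmx1 //.
Qed.

Lemma psd_herm n (A : 'M[algC]_n) : psdmx A -> adjmx A = A.
Proof. by case. Qed.

Lemma psd_form n (A : 'M[algC]_n) : psdmx A -> forall (v : 'cV[algC]_n), 0 <= (adjmx v *m A *m v) 0 0.
Proof. by case. Qed.

Lemma psd_entry_ge0 n (A : 'M[algC]_n) k : psdmx A -> 0 <= A k k.
Proof. by move=> /psd_form/(_ (delta_mx k 0)); rewrite adjmx_delta deltaM. Qed.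

Lemma psd_tr_ge0 n (A : 'M[algC]_n) : psdmx A -> 0 <= \tr A.
Proof. by move=> hA; apply: sumr_ge0 => k _; exact: psd_entry_ge0. Qed.

Lemma spec_diag_ge0 n (A : 'M[algC]_n) k : psdmx A -> 0 <= spectral_diag A 0 k.
Proof.
move=> hA; have := psd_form hA (adjmx (spectralmx A) *m delta_mx k 0).
rewrite adjmxM adjmxK adjmx_delta !mulmxA -(mulmxA _ _ (adjmx _)).
by rewrite -(mulmxA _ (spectralmx A)) (mulmxA (spectralmx A)) spec_diagE ?psd_herm // deltaM mxE eqxx mulr1n.
Qed.

Lemma psd_conj k l (A : 'M[algC]_k) (X : 'M[algC]_(k, l)) :
  psdmx A -> psdmx (adjmx X *m A *m X).
Proof.
move=> hA; split.
  by rewrite !adjmxM adjmxK psd_herm // mulmxA.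
move=> v; have := psd_form hA (X *m v).
by rewrite adjmxM !mulmxA.
Qed.

Lemma psd_diag k (d : 'rV[algC]_k) : (forall i, 0 <= d 0 i) -> psdmx (diag_mx d).
Proof.
move=> d0; split; first exact: adjmx_diag.
move=> v; rewrite mul_mx_diag !mxE; apply: sumr_ge0 => i _.
rewrite !mxE mulrAC; apply: mulr_ge0 => //.
by rewrite mulrC mul_conjC_ge0.
Qed.

Lemma psdD k (A B : 'M[algC]_k) : psdmx A -> psdmx B -> psdmx (A + B).
Proof.
move=> hA hB; split; first by rewrite adjmxD !psd_herm.
move=> v; rewrite mulmxDr mulmxDl mxE addr_ge0 //; exact: psd_form.
Qed.

Lemma psdZ k a (A : 'M[algC]_k) : 0 <= a -> psdmx A -> psdmx (a *: A).
Proof.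
move=> a0 hA; split; first by rewrite adjmxZ geC0_conj // psd_herm.
move=> v; rewrite -scalemxAr -scalemxAl mxE mulr_ge0 //; exact: psd_form.
Qed.

Lemma psd0 k : psdmx (0 : 'M[algC]_k).
Proof.
split; first by apply/matrixP=> i j; rewrite !mxE rmorph0.
by move=> v; rewrite mulmx0 mul0mx mxE.
Qed.

Lemma psd_sum k (I : finType) (F : I -> 'M[algC]_k) :
  (forall i, psdmx (F i)) -> psdmx (\sum_i F i).
Proof.
move=> hF; elim/big_ind: _ => //; [exact: psd0 | exact: psdD].
Qed.

Lemma sqrtmxE n (A : 'M[algC]_n) :
  sqrtmx A = adjmx (spectralmx A) *m diag_mx (map_mx sqrtC (spectral_diag A)) *m spectralmx A.
Proof. by rewrite /sqrtmx invmx_adj // spectral_unitarymx. Qed.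

Lemma sqrt_psd n (A : 'M[algC]_n) : psdmx A -> psdmx (sqrtmx A).
Proof.
move=> hA; rewrite sqrtmxE.
have := @psd_conj _ _ _ (spectralmx A) (@psd_diag _ (map_mx sqrtC (spectral_diag A)) _).
apply => i; rewrite mxE sqrtC_ge0.
exact: spec_diag_ge0.
Qed.

Lemma sqrt_sq n (A : 'M[algC]_n) : psdmx A -> sqrtmx A *m sqrtmx A = A.
Proof.
move=> hA; have U1 := unitary_adj (spectral_unitarymx A).
rewrite sqrtmxE !mulmxA -(mulmxA _ (spectralmx A)) U1 mulmx1.
rewrite -(mulmxA _ (diag_mx _) (diag_mx _)) mulmx_diag.
rewrite [RHS](spec_decomp (psd_herm hA)); congr (_ *m diag_mx _ *m _).
by apply/rowP=> i; rewrite !mxE -expr2 sqrtCK.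
Qed.

Lemma conjM n (U P Q : 'M[algC]_n) : U *m adjmx U = 1%:M ->
  adjmx U *m P *m U *m (adjmx U *m Q *m U) = adjmx U *m (P *m Q) *m U.
Proof.
move=> U1; rewrite !mulmxA -(mulmxA _ U (adjmx U)) U1 mulmx1.
by rewrite -(mulmxA _ P Q).
Qed.

Lemma sqrt_comm n (A X : 'M[algC]_n) : psdmx A -> X *m A = A *m X ->
  X *m sqrtmx A = sqrtmx A *m X.
Proof.
move=> hA XA.
set U := spectralmx A; set d := spectral_diag A.
have U1 : U *m adjmx U = 1%:M by apply: unitary_adj; apply: spectral_unitarymx.
have U1' : adjmx U *m U = 1%:M by apply: unitary_adjL; apply: spectral_unitarymx.
set Y := U *m X *m adjmx U.
have XE : X = adjmx U *m Y *m U.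
  by rewrite /Y !mulmxA U1' mul1mx -mulmxA U1' mulmx1.
have HY : Y *m diag_mx d = diag_mx d *m Y.
  rewrite -(spec_diagE (psd_herm hA)) -/U /Y.
  rewrite !mulmxA -(mulmxA _ (adjmx U) U) U1' mulmx1.
  rewrite -(mulmxA _ (adjmx U) U) U1' mulmx1 -!(mulmxA U) XA //.
have HYe : Y *m diag_mx (map_mx sqrtC d) = diag_mx (map_mx sqrtC d) *m Y.
  clearbody Y; apply/matrixP=> k l; move/matrixP: HY => /(_ k l).
  rewrite !mul_mx_diag !mul_diag_mx !mxE.
  have [->|Y0] := eqVneq (Y k l) 0; first by rewrite !mul0r !mulr0.
  by rewrite mulrC => /(mulIf Y0) ->; rewrite mulrC.
rewrite sqrtmxE -/U -/d XE conjM // conjM // HYe //.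
Qed.

Lemma tr_psd_mul n (A B : 'M[algC]_n) : psdmx A -> psdmx B -> 0 <= \tr (A *m B).
Proof.
move=> hA hB; rewrite -(sqrt_sq hA).
have hS := sqrt_psd hA; set S := sqrtmx A in hS *.
clearbody S; rewrite -mulmxA mxtrace_mulC.
have := psd_conj S hB; rewrite psd_herm //.
exact: psd_tr_ge0.
Qed.

Lemma tr_herm_sq n (W : 'M[algC]_n) : adjmx W = W -> \tr (W *m W) = 0 -> W = 0.
Proof. by move=> hW; rewrite -{2}hW; apply: tr_mul_adj_eq0. Qed.

Lemma sqrt_unique n (A Y : 'M[algC]_n) : psdmx A -> psdmx Y -> Y *m Y = A ->
  sqrtmx A = Y.
Proof.
move=> hA hY YY.
set S := sqrtmx A.
have hS : psdmx S by apply: sqrt_psd.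
have SS : S *m S = A by apply: sqrt_sq.
have YS : Y *m S = S *m Y by apply: sqrt_comm => //; rewrite -YY mulmxA.
set W := Y - S.
have hW : adjmx W = W by rewrite adjmxB !psd_herm.
have W0 : W *m (Y + S) = 0.
  by rewrite /W mulmxBl !mulmxDr YY SS YS [S *m Y + A]addrC subrr.
have t1 : 0 <= \tr (W *m Y *m W).
  by apply: psd_tr_ge0; rewrite -{1}hW; apply: psd_conj.
have t2 : 0 <= \tr (W *m S *m W).
  by apply: psd_tr_ge0; rewrite -{1}hW; apply: psd_conj.
have t0 : \tr (W *m Y *m W) + \tr (W *m S *m W) = 0.
  by rewrite -mxtraceD -mulmxDl -mulmxDr W0 mul0mx mxtrace0.
have tS : \tr (W *m S *m W) = 0.
  by move/eqP: t0; rewrite paddr_eq0 // => /andP[_ /eqP].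
set U := spectralmx A; set e := map_mx sqrtC (spectral_diag A).
have U1 : U *m adjmx U = 1%:M by apply: unitary_adj; apply: spectral_unitarymx.
have U1' : adjmx U *m U = 1%:M by apply: unitary_adjL; apply: spectral_unitarymx.
have e0 : forall l, 0 <= e 0 l by move=> l; rewrite mxE sqrtC_ge0 spec_diag_ge0.
set Q := U *m W *m adjmx U.
have WE : W = adjmx U *m Q *m U.
  by rewrite /Q !mulmxA U1' mul1mx -mulmxA U1' mulmx1.
have hQ : adjmx Q = Q by rewrite /Q !adjmxM adjmxK hW mulmxA.
have SE : S = adjmx U *m diag_mx e *m U by rewrite /S sqrtmxE.
have tQ : \tr (Q *m diag_mx e *m Q) = 0.
  by rewrite -tS WE SE !conjM // [RHS]mxtrace_mulC (mulmxA U) U1 mul1mx.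
clearbody e Q.
have EQ : diag_mx e *m Q = 0.
  have : \sum_k \sum_l e 0 l * `|Q l k| ^+ 2 = 0.
    rewrite -[RHS]tQ /mxtrace; apply: eq_bigr => k _; rewrite mxE; apply: eq_bigr => l _.
    rewrite mul_mx_diag mxE.
    have -> : Q k l = (Q l k)^* by rewrite -{1}hQ adjmxE.
    by rewrite normCK [LHS]mulrC [RHS]mulrAC [Q l k * _]mulrC.
  move/eqP; rewrite psumr_eq0 => [/allP Hk|k _]; last first.
    by apply: sumr_ge0 => l _; rewrite mulr_ge0 ?exprn_ge0.
  apply/matrixP=> l k; rewrite mul_diag_mx !mxE.
  move: (Hk k (mem_index_enum _)) => /=.
  rewrite psumr_eq0 => [/allP /(_ l (mem_index_enum _))|]; last first.
    by move=> l' _; rewrite mulr_ge0 ?exprn_ge0.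
  by rewrite /= mulf_eq0 expf_eq0 /= normr_eq0 => /orP[]/eqP->; rewrite ?mul0r ?mulr0.
have QE : Q *m diag_mx e = 0.
  by rewrite -hQ -(adjmx_diag e0) -adjmxM EQ; apply/matrixP=> i j; rewrite !mxE rmorph0.
have SW : S *m W = 0 by rewrite SE WE conjM // EQ mulmx0 mul0mx.
have WS : W *m S = 0 by rewrite SE WE conjM // QE mulmx0 mul0mx.
have WW : W *m W = 0.
  move: SW WS; rewrite /W mulmxBr mulmxBl !mulmxBl !mulmxBr.
  move=> /eqP; rewrite subr_eq0 => /eqP SY /eqP; rewrite subr_eq0 => /eqP YS'.
  by rewrite SY YS' subrr subr0 YY SS subrr.
have : W = 0 by apply: tr_herm_sq => //; rewrite WW mxtrace0.
by move=> /eqP; rewrite subr_eq0 => /eqP.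
Qed.

Section Idx.
Variables m n : nat.
Local Notation idx := (@mxvec_index m n).

Definition pr (x : 'I_(m * n)) : 'I_m * 'I_n :=
  enum_val (cast_ord (esym (mxvec_cast m n)) x).

Lemma pr_idx i j : pr (idx i j) = (i, j).
Proof. by rewrite /pr /mxvec_index cast_ordK enum_rankK. Qed.

Lemma idx_inj i j k l : (idx i j == idx k l) = (i == k) && (j == l).
Proof.
apply/eqP/andP => [E|[/eqP-> /eqP->]] //.
by have := congr1 pr E; rewrite !pr_idx => -[-> ->].
Qed.

Lemma sum_idx (F : 'I_(m * n) -> algC) :
  \sum_x F x = \sum_i \sum_j F (idx i j).
Proof.
rewrite pair_big /= (reindex (fun p : 'I_m * 'I_n => idx p.1 p.2)) //.
exists pr => [[i j] _|x _] /=; first by rewrite pr_idx.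
by case/mxvec_indexP: x => i j; rewrite pr_idx.
Qed.

Lemma mx_idxP (X Y : 'M[algC]_(m * n)) :
  (forall a b c d, X (idx a b) (idx c d) = Y (idx a b) (idx c d)) -> X = Y.
Proof.
move=> H; apply/matrixP=> x y.
by case/mxvec_indexP: x => a b; case/mxvec_indexP: y => c d.
Qed.

Lemma kronE (A : 'M[algC]_m) (B : 'M[algC]_n) a b c d :
  kron A B (idx a b) (idx c d) = A a c * B b d.
Proof. by rewrite /kron mxE -!/(pr _) !pr_idx. Qed.

Lemma kron_delta_sum (M : 'I_m -> 'M[algC]_n) a b c d :
  (\sum_i kron (delta_mx i i) (M i)) (idx a b) (idx c d) = (a == c)%:R * M a b d.
Proof.
rewrite summxE (bigD1 a) //= big1 ?addr0 => [|i ia]; rewrite kronE mxE.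
  by rewrite eqxx eq_sym; case: (a == c); rewrite ?mul1r ?mul0r.
by rewrite eq_sym (negPf ia) mul0r.
Qed.

Definition bdiag (X : 'M[algC]_(m * n)) :=
  forall a b c d, a != c -> X (idx a b) (idx c d) = 0.

Definition Pblk (i : 'I_m) : 'M[algC]_(m * n) :=
  diag_mx (\row_x ((pr x).1 == i)%:R).

Lemma bdiag_comm X : bdiag X -> forall i, Pblk i *m X = X *m Pblk i.
Proof.
move=> hX i; apply: mx_idxP => a b c d.
rewrite mul_diag_mx mul_mx_diag !mxE !pr_idx /=.
have [->|ac] := eqVneq a c; first by rewrite mulrC.
by rewrite hX // mulr0 mul0r.
Qed.

Lemma comm_bdiag X : (forall i, Pblk i *m X = X *m Pblk i) -> bdiag X.
Proof.
move=> hX a b c d ac; move/matrixP: (hX a) => /(_ (idx a b) (idx c d)).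
rewrite mul_diag_mx mul_mx_diag !mxE !pr_idx /= eqxx mul1r eq_sym (negPf ac) mulr0.
by [].
Qed.

Lemma bdiag_sqrt X : psdmx X -> bdiag X -> bdiag (sqrtmx X).
Proof.
move=> hX bX; apply: comm_bdiag => i; apply: sqrt_comm => //.
exact: bdiag_comm.
Qed.

Definition pinch (R : 'M[algC]_(m * n)) : 'M[algC]_(m * n) :=
  \matrix_(x, y) (((pr x).1 == (pr y).1)%:R * R x y).

Lemma pinchE R a b c d : pinch R (idx a b) (idx c d) = (a == c)%:R * R (idx a b) (idx c d).
Proof. by rewrite mxE !pr_idx. Qed.

Lemma tr_pinch R X : bdiag X -> \tr (R *m X) = \tr (pinch R *m X).
Proof.
move=> hX; rewrite /mxtrace; apply: eq_bigr => x _; rewrite !mxE.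
apply: eq_bigr => y _; rewrite mxE.
case/mxvec_indexP: x => a b; case/mxvec_indexP: y => c d; rewrite !pr_idx /=.
have [->|ac] := eqVneq a c; first by rewrite mul1r.
by rewrite hX 1?eq_sym // !mulr0.
Qed.

Lemma adj_Pblk i : adjmx (Pblk i) = Pblk i.
Proof. by apply: adjmx_diag => x; rewrite mxE ler0n. Qed.

Lemma pinch_sum R : pinch R = \sum_i adjmx (Pblk i) *m R *m Pblk i.
Proof.
apply: mx_idxP => a b c d; rewrite pinchE summxE.
under eq_bigr => i _ do rewrite adj_Pblk mul_diag_mx mul_mx_diag !mxE !pr_idx /=.
rewrite (bigD1 a) //= big1 ?addr0 => [|i ia].
  by rewrite eqxx mul1r eq_sym mulrC.
by rewrite eq_sym (negPf ia) mul0r mul0r.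
Qed.

Lemma pinch_psd R : psdmx R -> psdmx (pinch R).
Proof.
move=> hR; rewrite pinch_sum; apply: psd_sum => i.
exact: psd_conj.
Qed.

Lemma pinch_bdiag R : bdiag (pinch R).
Proof. by move=> a b c d ac; rewrite pinchE (negPf ac) mul0r. Qed.

Definition Emb (i : 'I_m) : 'M[algC]_(n, m * n) :=
  \matrix_(j, x) (x == idx i j)%:R.

Lemma EmbM i k (M : 'M[algC]_(m * n, k)) j y : (Emb i *m M) j y = M (idx i j) y.
Proof.
rewrite mxE (bigD1 (idx i j)) //= big1 ?addr0 => [|x xi]; rewrite mxE.
  by rewrite eqxx mul1r.
by rewrite (negPf xi) mul0r.
Qed.

Lemma MadjEmb i k (M : 'M[algC]_(k, m * n)) x l : (M *m adjmx (Emb i)) x l = M x (idx i l).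
Proof.
rewrite mxE (bigD1 (idx i l)) //= big1 ?addr0 => [|y yi]; rewrite adjmxE mxE.
  by rewrite eqxx rmorph1 mulr1.
by rewrite (negPf yi) rmorph0 mulr0.
Qed.

Lemma adjEmbM i k (M : 'M[algC]_(n, k)) a b l :
  (adjmx (Emb i) *m M) (idx a b) l = (a == i)%:R * M b l.
Proof.
have [->|ai] := eqVneq a i.
  rewrite mxE (bigD1 b) //= big1 ?addr0 => [|j jb]; rewrite adjmxE mxE.
    by rewrite eqxx rmorph1.
  by rewrite idx_inj eqxx /= eq_sym (negPf jb) rmorph0 mul0r.
rewrite mxE big1 ?mul0r // => j _; rewrite adjmxE mxE idx_inj (negPf ai) /=.
by rewrite rmorph0 mul0r.
Qed.

Lemma MEmb i k (M : 'M[algC]_(k, n)) x c d :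
  (M *m Emb i) x (idx c d) = (c == i)%:R * M x d.
Proof.
rewrite -[M *m Emb i]adjmxK adjmxE adjmxM adjEmbM adjmxE rmorphM /= conjCK.
by case: (c == i); rewrite ?rmorph1 ?rmorph0.
Qed.

Lemma kron_emb i (M : 'M[algC]_n) : kron (delta_mx i i) M = adjmx (Emb i) *m M *m Emb i.
Proof.
apply: mx_idxP => a b c d; rewrite kronE MEmb adjEmbM mxE.
by case: (a == i); case: (c == i); rewrite /= ?mul1r ?mul0r ?mulr0.
Qed.

Lemma Emb_adj i k : Emb i *m adjmx (Emb k) = (i == k)%:R *: 1%:M.
Proof.
apply/matrixP=> j l; rewrite MadjEmb !mxE idx_inj eq_sym.
by rewrite (eq_sym l); case: (i == k); case: (j == l); rewrite /= ?mulr1 ?mulr0 ?mul1r ?mul0r.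
Qed.

Lemma kron_psd i (M : 'M[algC]_n) : psdmx M -> psdmx (kron (delta_mx i i : 'M[algC]_m) M).
Proof. by move=> hM; rewrite kron_emb; apply: psd_conj. Qed.

Lemma kron_tr i (M : 'M[algC]_n) : \tr (kron (delta_mx i i : 'M[algC]_m) M) = \tr M.
Proof. by rewrite kron_emb mxtrace_mulC mulmxA Emb_adj eqxx scale1r mul1mx. Qed.

Lemma kron_lin i (I : finType) (c : I -> algC) (M : I -> 'M[algC]_n) :
  \sum_j c j *: kron (delta_mx i i : 'M[algC]_m) (M j) = kron (delta_mx i i : 'M[algC]_m) (\sum_j c j *: M j).
Proof.
rewrite kron_emb mulmx_sumr mulmx_suml; apply: eq_bigr => j _.
by rewrite kron_emb -scalemxAr -scalemxAl.
Qed.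

Lemma kronZ i c (M : 'M[algC]_n) : c *: kron (delta_mx i i : 'M[algC]_m) M = kron (delta_mx i i : 'M[algC]_m) (c *: M).
Proof. by rewrite !kron_emb -scalemxAr -scalemxAl. Qed.

End Idx.

Section Main.
Variables m n : nat.
Local Notation idx := (@mxvec_index m n).

Lemma pi_props (sigma : 'M[algC]_(m * n)) : partial_incoherent sigma ->
  [/\ psdmx sigma, bdiag sigma & \tr sigma = 1].
Proof.
case=> p [s [p0 p1 hs ->]]; split.
- apply: psd_sum => i; apply: psdZ => //; apply: kron_psd; exact: (hs i).1.
- move=> a b c d ac; rewrite summxE big1 // => i _.
  rewrite mxE kronE mxE.
  have [ai|ai] := eqVneq a i; last by rewrite /= !mul0r mulr0.
  by move: ac; rewrite ai => /negPf; rewrite eq_sym => ->; rewrite mul0r mulr0.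
- rewrite raddf_sum /= -p1; apply: eq_bigr => i _.
  by rewrite mxtraceZ kron_tr (hs i).2 mulr1.
Qed.

Variable rho : 'M[algC]_(m * n).
Hypothesis hrho : is_state rho.

Let R := sqrtmx rho.
Let hR : psdmx R. Proof. exact: sqrt_psd hrho.1. Qed.
Let B i := Bblock rho i.

Lemma BblockE i j k : B i j k = R (idx i j) (idx i k).
Proof. by rewrite /B /Bblock mxE. Qed.

Lemma B_emb i : B i = (@Emb m n i) *m R *m adjmx ((@Emb m n i)).
Proof. by apply/matrixP=> j k; rewrite MadjEmb EmbM BblockE. Qed.

Lemma B_psd i : psdmx (B i).
Proof. by rewrite B_emb -{1}(adjmxK ((@Emb m n i))); apply: psd_conj. Qed.

Lemma pinchR_sq : pinch R *m pinch R = \sum_i kron (delta_mx i i) (B i *m B i).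
Proof.
apply: mx_idxP => a b c d; rewrite kron_delta_sum mxE sum_idx.
rewrite (bigD1 a) //= [X in _ + X]big1 ?addr0 => [|e ea]; last first.
  by rewrite big1 // => f _; rewrite !pinchE eq_sym (negPf ea) mul0r mul0r.
rewrite mxE; have [<-|ac] := eqVneq a c.
  rewrite mul1r; apply: eq_bigr => f _; rewrite !pinchE !eqxx !mul1r.
  by rewrite !BblockE.
by rewrite mul0r big1 // => f _; rewrite !pinchE (negPf ac) mul0r mulr0.
Qed.

Lemma tr_pinchR_sq : \tr (pinch R *m pinch R) = \sum_i \tr (B i *m B i).
Proof. by rewrite pinchR_sq raddf_sum /=; apply: eq_bigr => i _; rewrite kron_tr. Qed.

Lemma lower_bound sigma : partial_incoherent sigma ->
  let A := affinity rho sigma in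
  0 <= A /\ A ^+ 2 <= \sum_i \tr (B i *m B i).
Proof.
move=> /pi_props [hs bs ts] A.
set S := sqrtmx sigma.
have hS : psdmx S by apply: sqrt_psd.
have SS : S *m S = sigma by apply: sqrt_sq.
have bS : bdiag S by apply: bdiag_sqrt.
have A0 : 0 <= A by apply: tr_psd_mul.
split => //.
have AE : A = \tr (pinch R *m S) by rewrite /A /affinity -/R -/S; apply: tr_pinch.
set P := pinch R in AE *.
have hP : adjmx P = P by apply: psd_herm; apply: pinch_psd.
set H := P - A *: S.
have hH : adjmx H = H by rewrite adjmxB adjmxZ geC0_conj // hP psd_herm.
have := tr_mul_adj_ge0 H; rewrite hH /H mulmxBl !mulmxBr -!scalemxAr -!scalemxAl.
rewrite !raddfB /= !mxtraceZ -AE [\tr (S *m P)]mxtrace_mulC -AE SS ts -tr_pinchR_sq -/P.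
by rewrite mulr1 subrr addr0 subr_ge0 -expr2.
Qed.
End Main.

Section Part3.
Variables m n : nat.
Local Notation idx := (@mxvec_index m n).
Variable rho : 'M[algC]_(m * n).
Hypothesis hrho : is_state rho.
Local Notation R := (sqrtmx rho).
Local Notation B i := (Bblock rho i).
Local Notation T := (\sum_i \tr (Bblock rho i *m Bblock rho i)).

Lemma hR : psdmx R. Proof. exact: sqrt_psd hrho.1. Qed.

Lemma herm_B i : adjmx (B i) = B i.
Proof. exact/psd_herm/B_psd. Qed.

Lemma trBB_ge0 i : 0 <= \tr (B i *m B i).
Proof. by apply: tr_psd_mul; apply: B_psd. Qed.

Lemma T_pos : 0 < T.
Proof.
have hP : adjmx (pinch R) = pinch R by apply/psd_herm/pinch_psd/hR.
have T0 : 0 <= T by rewrite -tr_pinchR_sq // -{2}hP; apply: tr_mul_adj_ge0.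
rewrite lt0r T0 andbT; apply/eqP => TE.
have P0 : pinch R = 0 by apply: tr_herm_sq => //; rewrite tr_pinchR_sq.
have trR : \tr R = 0.
  rewrite /mxtrace sum_idx big1 // => a _; rewrite big1 // => b _.
  by move/matrixP: P0 => /(_ (idx a b) (idx a b)); rewrite pinchE eqxx mul1r => ->; rewrite mxE.
have hR' := hR.
have Q0 : sqrtmx R = 0.
  apply: tr_herm_sq; first by apply/psd_herm/sqrt_psd.
  by rewrite sqrt_sq.
have : R = 0 by rewrite -(sqrt_sq hR') Q0 mul0mx.
move=> R0; have := hrho.2; rewrite -(sqrt_sq hrho.1) R0 mul0mx mxtrace0.
by move/eqP; rewrite eq_sym oner_eq0.
Qed.

Lemma T_neq0 : T != 0. Proof. by rewrite gt_eqF // T_pos. Qed.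

Lemma n_gt0 : (0 < n)%N.
Proof.
case: (pickP (fun _ : 'I_(m * n) => true)) => [x _|H].
  by case: (pr x).2 => k hk; apply: leq_ltn_trans hk.
have := hrho.2; rewrite /mxtrace big1 => [/eqP|x _]; last by have := H x.
by rewrite eq_sym oner_eq0.
Qed.

Variable V : 'I_m -> 'M[algC]_n.
Hypothesis hV : forall i, adjmx (V i) *m V i = 1%:M.
Hypothesis hEig : forall i j, exists lam : algC,
  Bblock rho i *m col j (V i) = lam *: col j (V i).

Local Notation c i j := (col j (V i)).
Local Notation lam i j := (diag_elt rho V i j).

Lemma cnorm i j : (adjmx (c i j) *m c i j) 0 0 = 1.
Proof.
have := congr1 (fun M : 'M[algC]_n => M j j) (hV i).
rewrite [in X in _ = X -> _]mxE eqxx /= => H; rewrite -[RHS]H.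
by rewrite !mxE; apply: eq_bigr => k _; rewrite !mxE.
Qed.

Lemma eigE i j : B i *m c i j = lam i j *: c i j.
Proof.
have [l hl] := hEig i j; rewrite hl; congr (_ *: _).
by rewrite /diag_elt -mulmxA hl -scalemxAr mxE cnorm mulr1.
Qed.

Lemma sum_col_adj i : \sum_j c i j *m adjmx (c i j) = 1%:M.
Proof.
rewrite -(mulmx1C (hV i)); apply/matrixP=> a b; rewrite summxE mxE.
apply: eq_bigr => j _; rewrite mxE big_ord1 !mxE.
by [].
Qed.

Lemma Bdec i : B i = \sum_j lam i j *: (c i j *m adjmx (c i j)).
Proof.
rewrite -[B i]mulmx1 -(sum_col_adj i) mulmx_sumr; apply: eq_bigr => j _.
by rewrite mulmxA eigE scalemxAl.
Qed.

Lemma B2dec i : B i *m B i = \sum_j (lam i j ^+ 2) *: (c i j *m adjmx (c i j)).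
Proof.
rewrite {2}(Bdec i) mulmx_sumr; apply: eq_bigr => j _.
by rewrite -scalemxAr mulmxA eigE -scalemxAl scalerA expr2.
Qed.

Lemma trB2 i : \tr (B i *m B i) = \sum_j lam i j ^+ 2.
Proof.
rewrite B2dec raddf_sum /=; apply: eq_bigr => j _.
by rewrite mxtraceZ mxtrace_mulC /mxtrace big_ord1 cnorm mulr1.
Qed.

Lemma closestE : closest_sigma rho V =
  \sum_i kron (delta_mx i i) (T^-1 *: (B i *m B i)).
Proof.
rewrite /closest_sigma; apply: eq_bigr => i _; rewrite kron_lin.
congr kron; rewrite B2dec scaler_sumr; apply: eq_bigr => j _.
rewrite scalerA /qcoef; congr (_ *: _).
have -> : \sum_(k < m) \sum_(l < n) diag_elt rho V k l ^+ 2 = T.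
  by apply: eq_bigr => k _; rewrite trB2.
by rewrite mulrC.
Qed.

Definition sig := \sum_i kron (delta_mx i i) (T^-1 *: (B i *m B i)).

Lemma sig_pi : partial_incoherent sig.
Proof.
have Tn0 := T_neq0.
have Tp := T_pos.
exists (fun i => \tr (B i *m B i) / T).
exists (fun i => if \tr (B i *m B i) == 0 then n%:R^-1 *: 1%:M
                 else (\tr (B i *m B i))^-1 *: (B i *m B i)).
split.
- by move=> i; rewrite divr_ge0 ?trBB_ge0 ?ltW.
- by rewrite -mulr_suml mulfV.
- move=> i; case: eqP => [_|/eqP t0].
    have n0 : n%:R != 0 :> algC by rewrite pnatr_eq0 -lt0n n_gt0.
    split; last by rewrite mxtraceZ mxtrace1 mulVf.
    apply: psdZ; first by rewrite invr_ge0 ler0n.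
    by rewrite -diag_const_mx; apply: psd_diag => j; rewrite mxE ler01.
  split; last by rewrite mxtraceZ mulVf.
  apply: psdZ; first by rewrite invr_ge0 trBB_ge0.
  have h1 : psdmx (1%:M : 'M[algC]_n).
    by rewrite -diag_const_mx; apply: psd_diag => j; rewrite mxE ler01.
  by have := psd_conj (B i) h1; rewrite mulmx1 herm_B.
- rewrite /sig; apply: eq_bigr => i _; rewrite kronZ; congr kron.
  case: eqP => [t0|/eqP t0].
    have B0 : B i = 0 by apply: tr_herm_sq => //; apply: herm_B.
    by rewrite t0 mul0r scale0r B0 mulmx0 scaler0.
  by rewrite scalerA mulrAC mulfV // mul1r.
Qed.

Definition Y := (sqrtC T)^-1 *: pinch R.

Lemma Y_psd : psdmx Y.
Proof.
apply: psdZ; first by rewrite invr_ge0 sqrtC_ge0 ltW // T_pos.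
exact/pinch_psd/hR.
Qed.

Lemma YY : Y *m Y = sig.
Proof.
rewrite /Y -scalemxAr -scalemxAl scalerA pinchR_sq // -expr2 exprVn sqrtCK.
rewrite /sig scaler_sumr; apply: eq_bigr => i _; exact: kronZ.
Qed.

Lemma sig_sqrt : sqrtmx sig = Y.
Proof.
apply: sqrt_unique; last exact: YY.
- by case: (pi_props sig_pi).
- exact: Y_psd.
Qed.

Lemma Y_bdiag : bdiag Y.
Proof. by move=> a b c' d ac; rewrite mxE pinch_bdiag // mulr0. Qed.

Lemma affinity_sig : affinity rho sig ^+ 2 = T.
Proof.
rewrite /affinity sig_sqrt tr_pinch; last exact: Y_bdiag.
rewrite /Y -scalemxAr mxtraceZ tr_pinchR_sq // exprMn exprVn sqrtCK.
by rewrite expr2 mulrA mulVf ?T_neq0 // mul1r.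
Qed.

Lemma part3 : partial_incoherent (closest_sigma rho V) /\
  1 - affinity rho (closest_sigma rho V) ^+ 2 = 1 - T.
Proof. by rewrite closestE -/sig affinity_sig; split => //; exact: sig_pi. Qed.

End Part3.

Lemma eig_exists (m n : nat) (rho : 'M[algC]_(m * n)) : is_state rho ->
  exists V : 'I_m -> 'M[algC]_n,
     (forall i, adjmx (V i) *m V i = 1%:M) /\
     (forall i j, exists lam : algC,
        Bblock rho i *m col j (V i) = lam *: col j (V i)).
Proof.
move=> hrho; exists (fun i => adjmx (spectralmx (Bblock rho i))); split.
  by move=> i; rewrite adjmxK; apply: unitary_adj; apply: spectral_unitarymx.
move=> i j; exists (spectral_diag (Bblock rho i) 0 j).
set U := spectralmx (Bblock rho i).
have U1 : U *m adjmx U = 1%:M by apply: unitary_adj; apply: spectral_unitarymx.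
have BU : Bblock rho i *m adjmx U = adjmx U *m diag_mx (spectral_diag (Bblock rho i)).
  rewrite {1}(spec_decomp (herm_B hrho i)) -/U -!mulmxA U1 mulmx1 //.
have DE : diag_mx (spectral_diag (Bblock rho i)) *m delta_mx j 0 =
          spectral_diag (Bblock rho i) 0 j *: (delta_mx j 0 : 'cV[algC]_n).
  apply/matrixP=> x y; rewrite mul_diag_mx !mxE.
  by case: eqP => [->|]; rewrite /= ?mulr0 ?mulr1.
by rewrite !colE mulmxA BU -mulmxA DE scalemxAr.
Qed.

Unset Implicit Arguments.

Theorem mainTheorem9 (m n : nat) (rho : 'M[algC]_(m * n)) :
  is_state rho ->
  let CA := 1 - \sum_(i < m) \tr (Bblock rho i *m Bblock rho i) in
  (forall sigma, partial_incoherent sigma -> CA <= 1 - affinity rho sigma ^+ 2) /\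
  (exists sigma, partial_incoherent sigma /\ 1 - affinity rho sigma ^+ 2 = CA) /\
  (forall V : 'I_m -> 'M[algC]_n,
     (forall i, adjmx (V i) *m V i = 1%:M) ->
     (forall i j, exists lam : algC,
        Bblock rho i *m col j (V i) = lam *: col j (V i)) ->
     partial_incoherent (closest_sigma rho V) /\
     1 - affinity rho (closest_sigma rho V) ^+ 2 = CA).
Proof.
move=> hrho CA.
have P3 : forall V : 'I_m -> 'M[algC]_n,
     (forall i, adjmx (V i) *m V i = 1%:M) ->
     (forall i j, exists lam : algC,
        Bblock rho i *m col j (V i) = lam *: col j (V i)) ->
     partial_incoherent (closest_sigma rho V) /\
     1 - affinity rho (closest_sigma rho V) ^+ 2 = CA.
  by move=> V hV hE; apply: part3.
split; last split => //.
  move=> sigma hs; have [_ H] := lower_bound hrho hs.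
  by rewrite /CA lerD2l lerN2.
have [V [hV hE]] := @eig_exists m n rho hrho.
by exists (closest_sigma rho V); apply: P3.
Qed.
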